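(* Let $S=\{0,1,a_0,a_1,a_2\}$ and consider the CA local rule $f$ of radius $1$ for undirected graphs (single vertex label, single edge label, edge relation symmetric) such that a vertex in state $i\in\{0,1\}$ takes state $1-i$, and a vertex in state $a_i$ takes state $0$ if it has a neighbor in a state from $\{0,1\}$ and state $a_{(i+1)\bmod 3}$ otherwise. Then for every nonempty undirected graph $G=(V,E)$ (finite or infinite), $G$ is connected if and only if $F_{G,f}$ has no configuration $c\in S^V$ of minimal period $6$, i.e. no $c$ with $F_{G,f}^6(c)=c$ and $F_{G,f}^j(c)\neq c$ for $1\le j\le 5$.
   Context: An undirected graph $G=(V,E)$ is viewed as a labeled graph with one vertex label and one edge label whose edge relation is symmetric. A CA local rule of radius $1$ determines the next state of a vertex from its current state and the set of states present among its neighbors; its global map $F_{G,f}:S^V\to S^V$ applies this rule simultaneously at every vertex. *)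

(* Defs.v *)
From Stdlib Require Import Relations ClassicalEpsilon.

(* A graph on an arbitrary (possibly infinite) vertex type V is given by an
   edge relation E : V -> V -> Prop; "undirected" = E symmetric. *)
Definition symmetric_graph {V : Type} (E : V -> V -> Prop) : Prop :=
  forall u v, E u v -> E v u.

Definition connected {V : Type} (E : V -> V -> Prop) : Prop :=
  forall u v : V, clos_refl_trans V E u v.

Inductive state : Type := Z0 | Z1 | A0 | A1 | A2.

(* Radius-1 local rule: takes the current state and the set of states
   present among the neighbours. *)
Definition local_rule (s : state) (N : state -> Prop) : state :=
  match s with
  | Z0 => Z1
  | Z1 => Z0
  | A0 => if excluded_middle_informative (N Z0 \/ N Z1) then Z0 else A1
  | A1 => if excluded_middle_informative (N Z0 \/ N Z1) then Z0 else A2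
  | A2 => if excluded_middle_informative (N Z0 \/ N Z1) then Z0 else A0
  end.

Definition neighbor_states {V : Type} (E : V -> V -> Prop) (c : V -> state)
  (v : V) : state -> Prop :=
  fun s => exists u, E v u /\ c u = s.

Definition global_map {V : Type} (E : V -> V -> Prop) (c : V -> state) :
  V -> state :=
  fun v => local_rule (c v) (neighbor_states E c v).

Definition has_min_period {V : Type} (E : V -> V -> Prop) (p : nat)
  (c : V -> state) : Prop :=
  Nat.iter p (global_map E) c = c /\
  forall j, 1 <= j < p -> Nat.iter j (global_map E) c <> c.

(* Main.v *)
Require Import Defs.
From Stdlib Require Import Relations ClassicalEpsilon Classical FunctionalExtensionality Lia.

Definition inD (s : state) : Prop := s = Z0 \/ s = Z1.
Definition nxt (s : state) : state :=
  match s with Z0 => Z1 | Z1 => Z0 | A0 => A1 | A1 => A2 | A2 => A0 end.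

Lemma mono {V} (E : V -> V -> Prop) c x : inD (c x) -> inD (global_map E c x).
Proof. unfold global_map, local_rule, inD; destruct (c x); intros [H|H]; try discriminate; auto. Qed.

Lemma spread {V} (E : V -> V -> Prop) c x w : E x w -> inD (c w) -> inD (global_map E c x).
Proof.
  intros HE Hw. unfold global_map, local_rule, inD.
  destruct (c x); auto;
  (destruct excluded_middle_informative as [_|n]; [auto|]);
  exfalso; apply n; (destruct Hw as [h|h]; [left|right]); exists w; auto.
Qed.

Lemma noD {V} (E : V -> V -> Prop) c x :
  (forall w, E x w -> ~ inD (c w)) -> global_map E c x = nxt (c x).
Proof.
  intros H. unfold global_map, local_rule.
  destruct (c x); auto;
  (destruct excluded_middle_informative as [[[w [h1 h2]]|[w [h1 h2]]]|_]; [ | | auto]);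
  exfalso; apply (H w h1); unfold inD; auto.
Qed.

Fixpoint par (t : nat) : state := match t with 0 => Z0 | S t => nxt (par t) end.
Fixpoint ap (t : nat) : state := match t with 0 => A0 | S t => nxt (ap t) end.

Lemma par_inD t : inD (par t).
Proof. induction t; simpl; unfold inD in *; auto. destruct IHt as [-> | ->]; simpl; auto. Qed.

Lemma ap_notD t : ~ inD (ap t).
Proof.
  assert (H : ap t = A0 \/ ap t = A1 \/ ap t = A2).
  { induction t; simpl; auto. destruct IHt as [-> | [-> | ->]]; simpl; auto. }
  unfold inD; destruct H as [-> | [-> | ->]]; intros [h|h]; discriminate.
Qed.

Theorem mainTheorem13 (V : Type) (E : V -> V -> Prop) :
  symmetric_graph E -> inhabited V ->
  (connected E <-> ~ exists c : V -> state, has_min_period E 6 c).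
Proof.
  intros Hsym Hinh. split.
  - intros conn [c [H6 Hj]].
    assert (ch1 : forall x, inD (global_map E c x) -> inD (c x)).
    { intros x h. assert (inD (Nat.iter 6 (global_map E) c x)) by (simpl; do 5 apply mono; exact h).
      rewrite H6 in H. exact H. }
    assert (ch2 : forall x, inD (global_map E (global_map E c) x) -> inD (c x)).
    { intros x h. assert (inD (Nat.iter 6 (global_map E) c x)) by (simpl; do 4 apply mono; exact h).
      rewrite H6 in H. exact H. }
    assert (cl : forall x w, E x w -> inD (c w) -> inD (c x)).
    { intros x w HE Hw. apply ch1. eapply spread; eauto. }
    destruct (classic (exists y, inD (c y))) as [[y Hy]|Hn].
    + assert (all : forall x, inD (c x)).
      { intros x. specialize (conn x y). induction conn; eauto. }
      apply (Hj 2); [lia|]. simpl. extensionality x.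
      destruct (all x) as [h|h].
      * assert (h1 : global_map E c x = Z1) by (unfold global_map; rewrite h; reflexivity).
        unfold global_map at 1; rewrite h1; simpl; auto.
      * assert (h1 : global_map E c x = Z0) by (unfold global_map; rewrite h; reflexivity).
        unfold global_map at 1; rewrite h1; simpl; auto.
    + assert (n0 : forall x, ~ inD (c x)) by (intros x h; apply Hn; eauto).
      apply (Hj 3); [lia|]. simpl. extensionality x.
      rewrite (noD E (global_map E (global_map E c))), (noD E (global_map E c)), (noD E c).
      * destruct (c x) eqn:e; simpl; auto; exfalso; apply (n0 x); rewrite e; unfold inD; auto.
      * intros w _ h; apply (n0 w); auto.
      * intros w _ h; apply (n0 w); auto.
      * intros w _ h; apply (n0 w); auto.
  - intros Hno. apply NNPP. intros Hnc. apply Hno.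
    unfold connected in Hnc.
    apply not_all_ex_not in Hnc. destruct Hnc as [u Hu].
    apply not_all_ex_not in Hu. destruct Hu as [v Hv].
    set (R := fun x => clos_refl_trans V E u x).
    set (cfg := fun t x => if excluded_middle_informative (R x) then par t else ap t).
    assert (step : forall t, global_map E (cfg t) = cfg (S t)).
    { intros t. extensionality x. unfold cfg at 2.
      destruct excluded_middle_informative as [r|r].
      - unfold global_map. unfold cfg at 1.
        destruct excluded_middle_informative as [_|]; [|contradiction].
        destruct (par_inD t) as [h|h]; rewrite h; simpl; rewrite h; reflexivity.
      - rewrite noD.
        + unfold cfg. destruct excluded_middle_informative; [contradiction|reflexivity].
        + intros w Hw. unfold cfg. destruct excluded_middle_informative as [rw|rw].
          * exfalso. apply r. unfold R in *. eapply rt_trans; [exact rw| apply rt_step; auto].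
          * apply ap_notD. }
    assert (it : forall k, Nat.iter k (global_map E) (cfg 0) = cfg k).
    { induction k; simpl; auto. rewrite IHk. apply step. }
    exists (cfg 0). split.
    + rewrite it. extensionality x. unfold cfg. destruct excluded_middle_informative; reflexivity.
    + intros j Hj. rewrite it. intros He.
      assert (Ru : R u) by apply rt_refl.
      assert (Rv : ~ R v) by exact Hv.
      pose proof (f_equal (fun f => f u) He) as Eu.
      pose proof (f_equal (fun f => f v) He) as Ev.
      unfold cfg in Eu, Ev; simpl in Eu, Ev.
      destruct excluded_middle_informative in Eu; [|contradiction].
      destruct excluded_middle_informative in Ev; [contradiction|].
      destruct j as [|[|[|[|[|[|]]]]]]; simpl in *; try lia; discriminate.
Qed.
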